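(* Let $m\ge n$ be positive integers, $\pi$ uniform on $S_{n+m}$, and $\mathbf L=(l_1,\dots,l_n)$ a fixed $n$-tuple of distinct elements of $[m]$. For $i\in[n]$ let $$d_i=\mathbb 1\{\pi(i)\in[n],\ \pi(n+l_i)\in[n+m]\setminus[n]\}-\mathbb 1\{\pi(i)\in[n+m]\setminus[n],\ \pi(n+l_i)\in[n]\}.$$ Then $\sum_{i=1}^n d_i$ has mean zero and is $\mathrm{SG}(2n)$.
   Context: $S_{n+m}$ is the symmetric group on $[n+m]=\{1,\dots,n+m\}$. A real random variable $X$ is $\mathrm{SG}(\sigma^2)$ if $\mathbb E[\exp\{\lambda(X-\mathbb EX)\}]\le\exp(\lambda^2\sigma^2/2)$ for all $\lambda\in\mathbb R$. *)

(* Defs.v *)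
From HB Require Import structures.
From mathcomp Require Import all_boot all_order all_algebra all_fingroup.
From mathcomp Require Import all_classical all_reals all_analysis.
Set Implicit Arguments. Unset Strict Implicit. Unset Printing Implicit Defensive.
Import Order.TTheory GRing.Theory Num.Theory.
Local Open Scope ring_scope.

Definition Eperm (R : realType) (N : nat) (f : {perm 'I_N} -> R) : R :=
  (#|[set: {perm 'I_N}]|%:R)^-1 * \sum_(s : {perm 'I_N}) f s.

Definition subGaussian_perm (R : realType) (N : nat)
  (X : {perm 'I_N} -> R) (sigma2 : R) : Prop :=
  forall lambda : R,
    Eperm (fun s => expR (lambda * (X s - Eperm X))) <=
    expR (lambda ^+ 2 * sigma2 / 2).

(* Position i (1-based) is lshift m i; position n + l_i (1-based) is
   rshift n (l i) (0-based value n + (l i)). "pi(j) in [n]" is the 0-based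
   condition pi j < n; "pi(j) in [n+m] \ [n]" is n <= pi j. *)
Definition d_i (R : realType) (n m : nat) (l : 'I_n -> 'I_m)
  (s : {perm 'I_(n + m)}) (i : 'I_n) : R :=
  ((s (lshift m i) < n)%N && (n <= s (rshift n (l i)))%N)%:R
  - ((n <= s (lshift m i))%N && (s (rshift n (l i)) < n)%N)%:R.

Definition sum_d (R : realType) (n m : nat) (l : 'I_n -> 'I_m)
  (s : {perm 'I_(n + m)}) : R :=
  \sum_(i < n) d_i R l s i.

(* Main.v *)
Require Import Defs.
From HB Require Import structures.
From mathcomp Require Import all_boot all_order all_algebra all_fingroup.
From mathcomp Require Import all_classical all_reals all_analysis.
From mathcomp Require Import ring lra.
Import Order.TTheory GRing.Theory Num.Theory.
Local Open Scope ring_scope.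

Lemma poly_aux (R : realType) (s : R) : 0 <= s -> s <= 1/4 ->
  1 + s <= (1 + 2*s)^+2 * (1 - s)^+2.
Proof. move=> h0 h1. nra. Qed.


Lemma ch_le_pos (R : realType) (x : R) : 0 <= x ->
  expR x + expR (-x) <= 2 * expR (x^+2).
Proof.
move=> x0; have [x1|x1] := leP 1 x.
  have h1 : expR (-x) <= expR x by rewrite ler_expR; lra.
  have h2 : expR x <= expR (x^+2).
    rewrite ler_expR expr2 -{1}[x]mul1r; apply: ler_wpM2r => //.
  lra.
set t := x / 2.
have ex : expR x = expR t ^+ 2 by rewrite expr2 -expRD /t; congr expR; field.
have enx : expR (- x) = expR (- t) ^+ 2 by rewrite expr2 -expRD /t; congr expR; field.
have ex2 : expR (x^+2) = expR (x^+2/2) ^+ 2 by rewrite [RHS]expr2 -expRD; congr expR; field.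
rewrite ex enx ex2.
have ab : expR t * expR (-t) = 1 by rewrite expRxMexpNx_1.
have ha := expR_ge1Dx t. have hb := expR_ge1Dx (-t).
have hc := expR_ge1Dx (x^+2/2).
have a0 := expR_gt0 t. have b0 := expR_gt0 (-t).
have x2 : 2 * t^+2 = x^+2/2 by rewrite /t; field.
rewrite -x2 in hc *.
move: ab ha hb hc a0 b0.
have t0 : 0 <= t by rewrite /t; lra.
have t1 : t <= 1/2 by rewrite /t; lra.
move: (expR t) (expR (-t)) (expR (2 * t^+2)) => a b c ab ha hb hc a0 b0.
clearbody t.
have hap : a * (1 - t) <= 1.
  rewrite -ab; apply: ler_wpM2l; [exact: ltW | lra].
have hbp : b * (1 + t) <= 1.
  rewrite -ab mulrC; apply: ler_wpM2r; [exact: ltW | lra].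
have hp : a^+2 * (1-t)^+2 <= 1.
  rewrite -exprMn; rewrite expr_le1 //; apply: mulr_ge0; [exact: ltW| lra].
have hq : b^+2 * (1+t)^+2 <= 1.
  rewrite -exprMn; rewrite expr_le1 //; apply: mulr_ge0; [exact: ltW| lra].
have tt : t^+2 <= 1/4.
  have -> : (1/4 : R) = (1/2)^+2 by field.
  rewrite ler_sqr ?nnegrE //; lra.
have hpoly := @poly_aux R (t^+2) (sqr_ge0 t) tt.
have pq0 : 0 < (1 - t^+2)^+2.
  apply: exprn_gt0; lra.
have e1 : (1 - t^+2)^+2 = (1-t)^+2 * (1+t)^+2 by rewrite -exprMn; congr (_ ^+ _); ring.
have hA : a^+2 * ((1-t)^+2 * (1+t)^+2) <= (1+t)^+2.
  rewrite mulrA; rewrite -[X in _ <= X]mul1r; apply: ler_wpM2r => //; exact: sqr_ge0.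
have hB : b^+2 * ((1-t)^+2 * (1+t)^+2) <= (1-t)^+2.
  rewrite [(1-t)^+2 * _]mulrC mulrA; rewrite -[X in _ <= X]mul1r; apply: ler_wpM2r => //; exact: sqr_ge0.
have hsum : (1+t)^+2 + (1-t)^+2 = 2 * (1 + t^+2) by ring.
rewrite -e1 in hA hB.
have key : (a^+2 + b^+2) * (1 - t^+2)^+2 <= (2 * (1 + 2 * t^+2)^+2) * (1 - t^+2)^+2.
  rewrite mulrDl -mulrA.
  move: hA hB hsum hpoly.
  move: ((1 - t^+2)^+2) ((1 + 2 * t^+2)^+2) (a^+2) (b^+2) ((1+t)^+2) ((1-t)^+2) (t^+2).
  move=> P Q A B U V T *; lra.
have k2 : a^+2 + b^+2 <= 2 * (1 + 2 * t^+2)^+2.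
  by rewrite -(ler_pM2r pq0).
have hc2 : (1 + 2 * t^+2)^+2 <= c^+2.
  rewrite ler_sqr ?nnegrE //.
    have := sqr_ge0 t; lra.
  have := sqr_ge0 t; lra.
lra.
Qed.

Lemma ch_le (R : realType) (x : R) :
  expR x + expR (-x) <= 2 * expR (x^+2).
Proof.
have [x0|x0] := leP 0 x; first exact: ch_le_pos.
have := @ch_le_pos R (-x) ltac:(lra); rewrite opprK sqrrN; lra.
Qed.

Section Comb.
Variables (R : realType) (n m : nat) (l : 'I_n -> 'I_m).
Hypothesis hl : injective l.

Definition tau (k : 'I_n) : {perm 'I_(n + m)} := tperm (lshift m k) (rshift n (l k)).

Lemma d_tau_same k s : d_i R l (tau k * s)%g k = - d_i R l s k.
Proof.
rewrite /d_i !permM /tau tpermL tpermR.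
by rewrite opprB; congr (_%:R - _%:R); rewrite andbC.
Qed.

Lemma d_tau_other k i s : i != k -> d_i R l (tau k * s)%g i = d_i R l s i.
Proof.
move=> ik; rewrite /d_i !permM /tau.
rewrite (tpermD (x := lshift m k) (y := rshift n (l k)) (z := lshift m i)); last first.
  by rewrite eq_rlshift.
  by rewrite (inj_eq (@lshift_inj _ _)) eq_sym.
rewrite (tpermD (x := lshift m k) (y := rshift n (l k)) (z := rshift n (l i))) //.
  by rewrite eq_lrshift.
by rewrite (inj_eq (@rshift_inj _ _)) (inj_eq hl) eq_sym.
Qed.

Lemma sum_tau k (F : {perm 'I_(n + m)} -> R) :
  \sum_s F s = \sum_s F (tau k * s)%g.
Proof. exact: (reindex_inj (@mulgI _ (tau k))). Qed.

Lemma sum_d_i0 k : \sum_s d_i R l s k = 0.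
Proof.
have h : \sum_s d_i R l s k = \sum_s - d_i R l s k.
  by rewrite (sum_tau k); apply: eq_bigr => s _; rewrite d_tau_same.
rewrite sumrN in h; lra.
Qed.

Lemma step (lam : R) k (H : {perm 'I_(n + m)} -> R) :
  (forall s, H (tau k * s)%g = H s) ->
  \sum_s H s * expR (lam * d_i R l s k) =
  \sum_s H s * ((expR (lam * d_i R l s k) + expR (- (lam * d_i R l s k))) / 2).
Proof.
move=> hH.
have h : \sum_s H s * expR (lam * d_i R l s k) = \sum_s H s * expR (- (lam * d_i R l s k)).
  by rewrite (sum_tau k); apply: eq_bigr => s _; rewrite hH d_tau_same mulrN.
have e : \sum_s H s * ((expR (lam * d_i R l s k) + expR (- (lam * d_i R l s k))) / 2) =
   ((\sum_s H s * expR (lam * d_i R l s k)) + \sum_s H s * expR (- (lam * d_i R l s k))) / 2.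
  rewrite -big_split /= big_distrl /=; apply: eq_bigr => s _; ring.
rewrite e -h; lra.
Qed.

Definition ch (y : R) := (expR y + expR (- y)) / 2.

Definition G (lam : R) (A : {set 'I_n}) (s : {perm 'I_(n + m)}) :=
  (\prod_(i in A) ch (lam * d_i R l s i)) * expR (lam * \sum_(i in ~: A) d_i R l s i).

Lemma stepG (lam : R) (A : {set 'I_n}) (k : 'I_n) : k \notin A -> \sum_s G lam A s = \sum_s G lam (k |: A) s.
Proof.
move=> kA.
pose H s := (\prod_(i in A) ch (lam * d_i R l s i)) *
   expR (lam * \sum_(i in ~: (k |: A)) d_i R l s i).
have eL : forall s, G lam A s = H s * expR (lam * d_i R l s k).
  move=> s; rewrite /G /H [X in expR (lam * X)](bigD1 k) /=; last by rewrite inE.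
  rewrite mulrDr expRD.
  have -> : \sum_(i in ~: A | i != k) d_i R l s i = \sum_(i in ~: (k |: A)) d_i R l s i.
    by apply: eq_bigl => i; rewrite !inE negb_or andbC.
  ring.
have eR : forall s, G lam (k |: A) s = H s * ch (lam * d_i R l s k).
  move=> s; rewrite /G /H big_setU1 //=; ring.
under eq_bigr => s _ do rewrite eL.
under [RHS]eq_bigr => s _ do rewrite eR.
apply: step => s; rewrite /H; congr (_ * expR (_ * _)).
  apply: eq_bigr => i iA; rewrite d_tau_other //; by apply: contraNneq kA => <-.
apply: eq_bigr => i; rewrite !inE negb_or => /andP[ik _].
by rewrite d_tau_other.
Qed.

Lemma G_all (lam : R) : \sum_s G lam finset.set0 s = \sum_s G lam [set: 'I_n] s.
Proof.
have h : forall j, (j <= n)%N -> \sum_s G lam finset.set0 s = \sum_s G lam [set i : 'I_n | (i < j)%N] s.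
  elim=> [|j IH] hj.
    by congr (\sum_s _); apply/funext => s; congr G; apply/setP => i; rewrite !inE.
  rewrite IH ?(ltnW hj) // (@stepG lam _ (Ordinal hj)); last by rewrite inE ltnn.
  congr (\sum_s _); apply/funext => s; congr G; apply/setP => i.
  by rewrite !inE ltnS [(i <= j)%N]leq_eqVlt.
rewrite (h n (leqnn n)); congr (\sum_s _); apply/funext => s; congr G.
by apply/setP => i; rewrite !inE ltn_ord.
Qed.

Lemma d_sq_le1 s i : (d_i R l s i) ^+ 2 <= 1.
Proof.
rewrite /d_i.
case: (ltnP (s (lshift m i)) n) => h1; case: (ltnP (s (rshift n (l i))) n) => h2 /=;
  rewrite ?andbT ?andbF /=; try lra.
Qed.

Lemma ch_bound lam s i : 0 <= ch (lam * d_i R l s i) <= expR (lam ^+ 2).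
Proof.
apply/andP; split.
  rewrite /ch; have := expR_ge0 (lam * d_i R l s i); have := expR_ge0 (- (lam * d_i R l s i)); lra.
have h := @ch_le R (lam * d_i R l s i).
have h2 : expR ((lam * d_i R l s i)^+2) <= expR (lam ^+ 2).
  rewrite ler_expR exprMn; have := d_sq_le1 s i; have := sqr_ge0 lam; nra.
rewrite /ch; lra.
Qed.

End Comb.

Theorem mainTheorem12 (R : realType) (n m : nat) (l : 'I_n -> 'I_m)
  (hn : (0 < n)%N) (hnm : (n <= m)%N) (hl : injective l) :
  Eperm (sum_d R l) = 0 /\ subGaussian_perm (sum_d R l) (2 * n)%:R.
Proof.
have E0 : Eperm (sum_d R l) = 0.
  rewrite /Eperm /sum_d exchange_big /= big1 ?mulr0 // => i _.
  exact: sum_d_i0.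
split => // lam; rewrite E0.
have cpos : (0 < #|[set: {perm 'I_(n + m)}]|)%N by apply/card_gt0P; exists 1%g.
rewrite /Eperm.
rewrite (eq_bigr (fun s => @G R n m l lam finset.set0 s)); last first.
  move=> s _; rewrite /G big_set0 mul1r subr0 /sum_d; congr (expR (_ * _)).
  by apply: eq_bigl => i; rewrite finset.setC0 inE.
rewrite G_all //.
have hb : \sum_s @G R n m l lam [set: 'I_n] s <= \sum_(s : {perm 'I_(n + m)}) expR (lam ^+ 2) ^+ n.
  apply: ler_sum => s _; rewrite /G.
  rewrite finset.setCT big_set0 mulr0 expR0 mulr1.
  have -> : expR (lam ^+ 2) ^+ n = \prod_(i in [set: 'I_n]) expR (lam ^+ 2).
    by rewrite prodr_const cardsT card_ord.
  apply: ler_prod => i _; exact: ch_bound.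
apply: le_trans (ler_wpM2l _ hb) _.
  by rewrite invr_ge0.
rewrite sumr_const -cardsT -[X in _ * X]mulr_natl mulrA mulVf ?mul1r; last by rewrite pnatr_eq0 -lt0n.
rewrite -expRM_natr ler_expR natrM; rewrite le_eqVlt; apply/orP; left; apply/eqP; field.
done.
Qed.
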